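(* Let $\mathbf{s}$ be a binary sequence that is not ultimately periodic, and let $p_{\mathbf{s}}(N)$ denote the number of distinct factors of length $N$ of $\mathbf{s}$. Then for all integers $k\ge1$ and $N\ge1$, $C_{2k}(\mathbf{s},\,2k\,p_{\mathbf{s}}(N))\ge N$.
   Context: Correlation measure: for $\mathbf{s}$ over $\{0,1\}$, an integer $r\ge1$, $D=(d_1,\dots,d_r)\in\mathbb{N}^r$ with $0\le d_1<\cdots<d_r$ and $M\in\mathbb{N}$, put $V(\mathbf{s},M,D)=\sum_{n=0}^{M-1}(-1)^{\mathbf{s}(n+d_1)+\cdots+\mathbf{s}(n+d_r)}$, and $C_r(\mathbf{s},N)=\max_{M,D}|V(\mathbf{s},M,D)|$ over all such $D$ and integers $M$ with $M+d_r\le N$. A factor of length $N$ of $\mathbf{s}$ is a word $\mathbf{s}(i)\mathbf{s}(i+1)\cdots\mathbf{s}(i+N-1)$ for some $i\ge0$. *)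

(* Defs.v *)
From mathcomp Require Import all_boot all_order all_algebra.
From mathcomp Require Import boolp.
Set Implicit Arguments. Unset Strict Implicit. Unset Printing Implicit Defensive.
Import Order.TTheory GRing.Theory Num.Theory.

(* A binary sequence is s : nat -> bool (true = 1, false = 0). *)

Definition ult_periodic (s : nat -> bool) : Prop :=
  exists p n0 : nat, 0 < p /\ forall n, n0 <= n -> s (n + p) = s n.

Definition factor (s : nat -> bool) (N i : nat) : N.-tuple bool :=
  [tuple s (i + j) | j < N].

Definition factor_complexity (s : nat -> bool) (N : nat) : nat :=
  #|[set w : N.-tuple bool | `[< exists i, w = factor s N i >] ]|.

Definition Vcorr (s : nat -> bool) (M : nat) (D : seq nat) : int :=
  (\sum_(n < M) (-1) ^+ (\sum_(d <- D) (s (n + d) : nat)))%R.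

(* C_r(s, N) = max |V(s,M,D)| over D = (d_1 < ... < d_r) with d_i in nat
   and M in nat with M + d_r <= N.  All such d_i and M are <= N, so we
   range over r-tuples of 'I_(N+1) and M < N+1 (max of empty family = 0). *)
Definition Ccorr (r : nat) (s : nat -> bool) (N : nat) : nat :=
  \max_(M < N.+1)
    \max_(D : r.-tuple 'I_N.+1 |
           sorted ltn (map val D) && (M + last 0 (map val D) <= N))
      `|Vcorr s M (map val D)|%N.
Arguments Ccorr : clear implicits.
Arguments factor_complexity : clear implicits.
Arguments Vcorr : clear implicits.

(* Main.v *)
Require Import Defs.
From mathcomp Require Import all_boot all_order all_algebra.
From mathcomp Require Import boolp.
From mathcomp Require Import zify.
Import GRing.Theory.

Section Aux.
Variable s : nat -> bool.

Definition Fs n := [set w : n.-tuple bool | `[< exists i, w = factor s n i >] ].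

Lemma in_Fs n i : factor s n i \in Fs n.
Proof. by rewrite inE; apply/asboolP; exists i. Qed.

Lemma FsP n w : w \in Fs n -> exists i, w = factor s n i.
Proof. by rewrite inE => /asboolP. Qed.

Lemma factor_eqP n i j : factor s n i = factor s n j <->
  (forall l, l < n -> s (i + l) = s (j + l)).
Proof.
split.
- move=> e l hl. have := congr1 (fun w => tnth w (Ordinal hl)) e.
  by rewrite /factor !tnth_mktuple.
- move=> h; apply: eq_from_tnth => l. rewrite /factor !tnth_mktuple. exact: h.
Qed.

Lemma pigeon n (X : seq nat) : uniq X -> factor_complexity s n < size X ->
  exists x y, [/\ x \in X, y \in X, x != y & factor s n x = factor s n y].
Proof.
move=> uX hc.
have [H|H] := pselect (exists x y, [/\ x \in X, y \in X, x != y & factor s n x = factor s n y]) => //.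
exfalso.
have inj : {in X &, injective (factor s n)}.
  move=> x y hx hy e. case: (eqVneq x y) => // ne. by case: H; exists x, y.
have u : uniq (map (factor s n) X) by rewrite map_inj_in_uniq.
have h1 : #|map (factor s n) X| <= #|Fs n|.
  apply/subset_leq_card/subsetP => w /mapP [x _ ->]; apply: in_Fs.
move/card_uniqP: u; rewrite size_map => e. rewrite e in h1.
have : size X <= factor_complexity s n by exact h1.
lia.
Qed.

Lemma pairs N k : forall X : seq nat, uniq X -> factor_complexity s N + 2 * k <= size X ->
  exists D : seq nat, [/\ size D = 2 * k, uniq D, {subset D <= X} &
     forall n, n < N -> ~~ odd (\sum_(d <- D) (s (n + d) : nat))].
Proof.
elim: k => [|k IH] X uX hs.
  by exists [::]; split => // n _; rewrite big_nil.
have hlt : factor_complexity s N < size X by lia.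
have [x [y [hx hy nxy e]]] := pigeon N X uX hlt.
set X' := rem y (rem x X).
have uX' : uniq X' by rewrite /X'; apply: rem_uniq; apply: rem_uniq.
have hyx : y \in rem x X by rewrite (mem_rem_uniq _ uX) inE eq_sym nxy hy.
have sX' : size X' = (size X).-1.-1 by rewrite /X' size_rem // size_rem.
have hle : factor_complexity s N + 2 * k <= size X' by rewrite sX'; lia.
have [D [sD uD subD pD]] := IH X' uX' hle.
exists [:: x, y & D]; split.
- by rewrite /= sD; lia.
- rewrite /= uD andbT in_cons negb_or nxy /=.
  apply/andP; split; apply/negP => /subD.
  + by move=> /mem_rem; rewrite (mem_rem_uniq _ uX) inE eqxx.
  + by rewrite /X' (mem_rem_uniq _ (rem_uniq _ uX)) inE eqxx.
- move=> z; rewrite !in_cons => /orP [/eqP->|/orP [/eqP->|/subD /mem_rem /mem_rem]] //.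
- move=> n hn; rewrite !big_cons.
  have := (proj1 (factor_eqP _ _ _) e) n hn.
  rewrite (addnC n x) (addnC n y) => ->.
  by rewrite !oddD addbA addbb /=; apply: pD.
Qed.

Definition pref {n} (w : n.+1.-tuple bool) : n.-tuple bool :=
  [tuple tnth w (widen_ord (leqnSn n) j) | j < n].

Lemma pref_factor n i : pref (factor s n.+1 i) = factor s n i.
Proof. by apply: eq_from_tnth => j; rewrite /pref /factor !tnth_mktuple. Qed.

Lemma period n i j :
  (forall a b, (forall l, l < n -> s (a + l) = s (b + l)) -> s (a + n) = s (b + n)) ->
  i < j -> (forall l, l < n -> s (i + l) = s (j + l)) -> ult_periodic s.
Proof.
move=> ext hij h0.
have H : forall L l, l < n + L -> s (i + l) = s (j + l).
  elim=> [|L IH] l hl.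
    by apply: h0; rewrite addn0 in hl.
  have e : s (i + L + n) = s (j + L + n).
    by apply: ext => l' hl'; rewrite -!addnA; apply: IH; lia.
  case: (ltnP l (n + L)) => hl2; first exact: IH.
  have -> : l = L + n by lia.
  by rewrite !addnA.
exists (j - i), i; split; first lia.
move=> m hm. have := H (m - i).+1 (m - i) (ltac:(lia)).
have -> : i + (m - i) = m by lia.
have -> : j + (m - i) = m + (j - i) by lia.
by move=> ->.
Qed.

Lemma MH_step n : factor_complexity s n.+1 <= factor_complexity s n -> ult_periodic s.
Proof.
move=> hle.
have sub : Fs n \subset pref @: Fs n.+1.
  apply/subsetP => w /FsP [i ->]. rewrite -pref_factor. apply: imset_f. apply: in_Fs.
have h1 := subset_leq_card sub.
have h2 := leq_imset_card pref (Fs n.+1).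
have inj : {in Fs n.+1 &, injective pref}.
  apply/imset_injP. rewrite eqn_leq h2 /=. exact: leq_trans hle h1.
have ext : forall i j, (forall l, l < n -> s (i + l) = s (j + l)) -> s (i + n) = s (j + n).
  move=> i j h. have e : factor s n.+1 i = factor s n.+1 j.
    apply: inj; try apply: in_Fs. by rewrite !pref_factor; apply/factor_eqP.
  exact: (proj1 (factor_eqP _ _ _) e n (ltnSn n)).
have [x [y [hx hy nxy e]]] := pigeon n (iota 0 (factor_complexity s n).+1) (iota_uniq 0 (factor_complexity s n).+1)
   (ltac:(by rewrite size_iota)).
case: (ltngtP x y) => hxy.
- exact: (period _ _ _ ext hxy (proj1 (factor_eqP _ _ _) e)).
- by apply: (period _ _ _ ext hxy); apply/factor_eqP.
- by rewrite hxy eqxx in nxy.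
Qed.

Lemma MH : ~ ult_periodic s -> forall n, n < factor_complexity s n.
Proof.
move=> np; elim=> [|n IH].
  rewrite /factor_complexity card_gt0; apply/set0Pn; exists (factor s 0 0).
  exact: in_Fs.
rewrite ltnNge; apply/negP => h. apply: np; apply: (MH_step n); lia.
Qed.

End Aux.

Theorem mainTheorem6 (s : nat -> bool) :
  ~ ult_periodic s ->
  forall k N : nat, 1 <= k -> 1 <= N ->
    N <= Ccorr (2 * k) s (2 * k * factor_complexity s N).
Proof.
move=> nper k N hk hN.
set P := factor_complexity s N.
have hP : N < P := MH s nper N.
have [D [sD uD subD pD]] := pairs s N k (iota 0 (P + 2 * k)) (iota_uniq 0 (P + 2 * k))
  (ltac:(by rewrite size_iota)).
set D0 := sort leq D.
have hD0 : forall d, d \in D0 -> d < P + 2 * k.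
  by move=> d; rewrite mem_sort => /subD; rewrite mem_iota => /andP [_]; lia.
have sz : size (map (fun d => @inord (2 * k * P) d) D0) == 2 * k.
  by rewrite size_map size_sort sD.
pose t := Tuple sz.
have Ht : map val t = D0.
  rewrite /= -map_comp -[RHS]map_id. apply/eq_in_map => d hd /=.
  apply: inordK. have := hD0 d hd. nia.
have hM : N < (2 * k * P).+1 by nia.
rewrite /Ccorr.
apply: (bigmax_sup (Ordinal hM)) => //.
apply: (bigmax_sup t).
  rewrite Ht /= ltn_sorted_uniq_leq sort_uniq uD sort_sorted ?andTb; last exact: leq_total.
  have : last 0 D0 \in 0 :: D0 := mem_last 0 D0.
  rewrite in_cons => /orP [/eqP ->|/hD0]; nia.
rewrite Ht /Vcorr.
have -> : (\sum_(n < N) (-1) ^+ (\sum_(d <- D0) (s (n + d) : nat)) = (N%:R : int))%R.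
  rewrite -[in RHS](subn0 N) -[RHS]sumr_const_nat big_mkord. apply: eq_bigr => n _.
  rewrite -signr_odd /D0 (perm_big D (permEl (perm_sort leq D))).
  by rewrite (negbTE (pD n (ltn_ord n))) expr0.
by rewrite natz absz_nat.
Qed.
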